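(* Let $\mathbf{f}$ be the Fibonacci sequence, fixed point of the substitution $0\mapsto01$, $1\mapsto0$. For an integer $k\ge1$, $\mathbf{f}$ is totally $(k,1)$-unbalanced if and only if $k\ge4$.
   Context: For positive integers $k,C$, a sequence $\mathbf{x}$ is totally $(k,C)$-unbalanced if for every length-$k$ factor $w$ of $\mathbf{x}$ there exist two factors $u,v$ of $\mathbf{x}$ with $|u|=|v|$ and $||u|_w-|v|_w|>C$, where $|u|_w$ is the number of (possibly overlapping) occurrences of $w$ in $u$. *)

(* Defs.v *)
From mathcomp Require Import all_boot.
Set Implicit Arguments. Unset Strict Implicit. Unset Printing Implicit Defensive.

Definition fib_sub_letter (a : nat) : seq nat :=
  if a == 0 then [:: 0; 1] else [:: 0].
Definition fib_sub (w : seq nat) : seq nat := flatten (map fib_sub_letter w).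

(* The n-th iterate has length F_{n+2} >= n+1, and each
   iterate is a prefix of the next, so the i-th letter of the fixed point is
   the i-th letter of fib_sub^(i+1)(0). *)
Definition fib_word (i : nat) : nat := nth 0 (iter i.+1 fib_sub [:: 0]) i.

Definition is_factor (x : nat -> nat) (u : seq nat) : Prop :=
  exists i, u = mkseq (fun j => x (i + j)) (size u).

Definition occ (u w : seq nat) : nat :=
  count (fun i => (i + size w <= size u) && (take (size w) (drop i u) == w))
        (iota 0 (size u).+1).

Definition totally_unbalanced (x : nat -> nat) (k C : nat) : Prop :=
  forall w, size w = k -> is_factor x w ->
    exists u v, [/\ is_factor x u, is_factor x v, size u = size v &
                   (C < occ u w - occ v w) || (C < occ v w - occ u w)].

(* Main.v *)
Require Import Defs.
From mathcomp Require Import all_boot.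
From mathcomp Require Import zify.
Set Implicit Arguments. Unset Strict Implicit. Unset Printing Implicit Defensive.

Notation f := fib_word.

Definition W n := iter n fib_sub [:: 0].

Lemma fib_sub_cat s t : fib_sub (s ++ t) = fib_sub s ++ fib_sub t.
Proof. by rewrite /fib_sub map_cat flatten_cat. Qed.

Lemma fib_sub_cons a s : fib_sub (a :: s) = fib_sub_letter a ++ fib_sub s.
Proof. by []. Qed.

Lemma WS n : W n.+1 = fib_sub (W n). Proof. by []. Qed.

Lemma W_head n : exists t, W n = 0 :: t.
Proof.
elim: n => [|n [t IH]]; first by exists [::].
by rewrite WS IH; eexists.
Qed.

Lemma size_fib_sub_ge s : size s <= size (fib_sub s).
Proof.
elim: s => [|a s IH] //=; rewrite fib_sub_cons size_cat.
by rewrite /fib_sub_letter; case: (a == 0) => /=; lia.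
Qed.

Lemma W_prefix n : exists r, W n.+1 = W n ++ r /\ r <> [::].
Proof.
elim: n => [|n [r [IH Hr]]]; first by exists [:: 1].
exists (fib_sub r); split.
  by rewrite [W n.+2]WS IH fib_sub_cat -WS IH.
case: r Hr {IH} => [|a r] // _; rewrite fib_sub_cons /fib_sub_letter.
by case: (a == 0).
Qed.

Lemma W_size n : n < size (W n).
Proof.
elim: n => [|n IH] //; have [r [-> Hr]] := W_prefix n.
rewrite size_cat; case: r Hr => [|a r] //= _; lia.
Qed.

Lemma W_stable n m i : i < size (W n) -> nth 0 (W (n + m)) i = nth 0 (W n) i.
Proof.
move=> Hi; elim: m => [|m IH]; first by rewrite addn0.
have [r [E _]] := W_prefix (n + m).
rewrite addnS E nth_cat IH.
have : size (W n) <= size (W (n + m)).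
  elim: m {IH E} => [|m IHm]; first by rewrite addn0.
  have [r' [E' _]] := W_prefix (n + m); rewrite addnS E' size_cat; lia.
by move=> H; have -> : i < size (W (n + m)) by lia.
Qed.

Lemma fE n i : i < size (W n) -> f i = nth 0 (W n) i.
Proof.
move=> Hi; rewrite /fib_word -/(W i.+1).
case: (leqP n i.+1) => H.
  have E : i.+1 = n + (i.+1 - n) by lia.
  by rewrite [in W i.+1]E W_stable.
have -> : n = i.+1 + (n - i.+1) by lia.
rewrite W_stable //; have := W_size i.+1; lia.
Qed.

Lemma all_fib_sub s : all (fun a => a <= 1) (fib_sub s).
Proof.
elim: s => [|a s IH] //=; rewrite fib_sub_cons all_cat IH andbT.
by rewrite /fib_sub_letter; case: (a == 0).
Qed.

Lemma f_le1 i : f i <= 1.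
Proof.
rewrite /fib_word iterS.
case: (ltnP i (size (fib_sub (iter i fib_sub [:: 0])))) => H.
  by have /allP := all_fib_sub (iter i fib_sub [:: 0]); apply; apply: mem_nth.
by rewrite nth_default.
Qed.


Definition O t := sumn (mkseq f t).
Definition P t := 2 * t - O t.

Lemma mk_iota (g : nat -> nat) x n : mkseq (fun j => g (x + j)) n = map g (iota x n).
Proof. by rewrite /mkseq -[x]addn0 iotaDl -map_comp addn0. Qed.

Lemma O_S t : O t.+1 = O t + f t.
Proof. by rewrite /O mkseqS -cats1 sumn_cat /= addn0. Qed.

Lemma O_le t : O t <= t.
Proof. elim: t => [|t IH] //; rewrite O_S; have := f_le1 t; lia. Qed.

Lemma O_mono a m : O a <= O (a + m) <= O a + m.
Proof.
elim: m => [|m IH]; first by rewrite !addn0; lia.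
rewrite addnS O_S; have := f_le1 (a + m); lia.
Qed.

Lemma size_fib_sub s : all (fun a => a <= 1) s -> size (fib_sub s) + sumn s = 2 * size s.
Proof.
elim: s => [|a s IH] //= /andP [Ha Hs]; rewrite fib_sub_cons size_cat.
have := IH Hs; rewrite /fib_sub_letter; case: a Ha => [|[|a]] //= _; lia.
Qed.

Lemma all_mkf t : all (fun a => a <= 1) (mkseq f t).
Proof. by apply/allP => x /mapP [j _ ->]; apply: f_le1. Qed.

Lemma fix_pt t : f (P t) = 0 /\ (f t = 0 -> f (P t).+1 = 1).
Proof.
set s := W t.+1.
have Ht : t < size s by have := W_size t.+1; rewrite /s; lia.
have Htake : take t s = mkseq f t.
  apply: (@eq_from_nth _ 0); first by rewrite size_take Ht size_mkseq.
  move=> j; rewrite size_take Ht => Hj.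
  rewrite nth_take // nth_mkseq // (fE (n := t.+1)) //; exact: ltn_trans Hj Ht.
have Hs : s = take t s ++ f t :: drop t.+1 s.
  by rewrite (fE (n := t.+1)) // -(drop_nth 0 Ht) cat_take_drop.
have HW : W t.+2 = fib_sub (mkseq f t) ++ fib_sub_letter (f t) ++ fib_sub (drop t.+1 s).
  by rewrite WS -/s {1}Hs fib_sub_cat fib_sub_cons Htake.
have HP : size (fib_sub (mkseq f t)) = P t.
  have := size_fib_sub (all_mkf t); rewrite size_mkseq /P -/(O t); lia.
have Hsz : (P t).+1 < size (W t.+2) \/ (P t < size (W t.+2) /\ f t = 1).
  rewrite HW !size_cat HP /fib_sub_letter.
  by case: (f t) (f_le1 t) => [|[|]] //= _; [left | right]; lia.
split.
  rewrite (fE (n := t.+2)); last by case: Hsz => [|[]]; lia.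
  by rewrite HW nth_cat HP ltnn subnn /fib_sub_letter; case: (f t == 0).
move=> H0; rewrite (fE (n := t.+2)); last by case: Hsz => [|[_]]; [lia| rewrite H0].
by rewrite HW nth_cat HP ltnNge leqnSn /= subSnn /fib_sub_letter H0.
Qed.


Lemma P_S t : P t.+1 = (P t).+2 - f t.
Proof. rewrite /P O_S; have := O_le t; have := f_le1 t; lia. Qed.

Lemma P_add a m : P (a + m) + (O (a + m) - O a) = P a + 2 * m.
Proof. rewrite /P; have := O_mono a m; have := O_le a; have := O_le (a + m); lia. Qed.

Lemma P_ltn a b : a < b -> P a < P b.
Proof.
move=> H; have E : b = a + (b - a) by lia.
have := P_add a (b - a); rewrite -E; have := O_mono a (b - a); rewrite -E; lia.
Qed.

Lemma P_ltE a b : (P a < P b) = (a < b).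
Proof.
case: (ltnP a b) => H; first exact: P_ltn.
apply/negbTE; rewrite -leqNgt; case: (ltnP b a) => H'.
  by apply: ltnW; apply: P_ltn.
by have -> : a = b by lia.
Qed.

Lemma P_inj a b : P a = P b -> a = b.
Proof.
move=> H; case: (ltngtP a b) => // Hab.
  by have := P_ltn Hab; rewrite H ltnn.
by have := P_ltn Hab; rewrite H ltnn.
Qed.

Lemma decomp x : (exists t, x = P t) \/ (exists t, x = (P t).+1 /\ f t = 0).
Proof.
elim: x => [|x [[t ->]|[t [-> H0]]]].
- by left; exists 0.
- have := f_le1 t; have := P_S t.
  case E0: (f t) => [|[|]] // E _.
    by right; exists t.
  by left; exists t.+1; rewrite E; lia.
- by left; exists t.+1; rewrite P_S H0.
Qed.

Lemma f_P t : f (P t) = 0. Proof. by case: (fix_pt t). Qed.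
Lemma f_P1 t : f t = 0 -> f (P t).+1 = 1. Proof. by case: (fix_pt t). Qed.
Lemma f_P1' t : f t = 1 -> f (P t).+1 = 0.
Proof.
move=> H; have := P_S t; rewrite H => E.
have E' : P t.+1 = (P t).+1 by lia.
by rewrite -E' f_P.
Qed.

Lemma f0_block x : f x = 0 -> exists t, x = P t.
Proof. by case: (decomp x) => [//|[t [-> H]]]; rewrite f_P1. Qed.

Lemma f1_block x : f x = 1 -> exists t, x = (P t).+1 /\ f t = 0.
Proof. by case: (decomp x) => [[t ->]|//]; rewrite f_P. Qed.

Lemma no11 x : f x = 1 -> f x.+1 = 0.
Proof.
move=> /f1_block [t [-> H0]]; have := P_S t; rewrite H0 subn0 => E.
by rewrite -E f_P.
Qed.

Lemma f1_pred x : f x = 1 -> 0 < x /\ f x.-1 = 0.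
Proof. by move=> /f1_block [t [-> H0]]; rewrite f_P. Qed.

Lemma no000 x : f x = 0 -> f x.+1 = 0 -> f x.+2 = 0 -> False.
Proof.
move=> /f0_block [t ->] H1 H2.
have Ht : f t = 1 by case: (f t) (f_le1 t) (f_P1 (t := t)) H1 => [|[|]] // _ ->.
have E : P t.+1 = (P t).+1 by rewrite P_S Ht; lia.
have Ht1 : f t.+1 = 1.
  by case: (f t.+1) (f_le1 t.+1) (f_P1 (t := t.+1)) H2 => [|[|]] // _; rewrite E => ->.
by have := no11 Ht; rewrite Ht1.
Qed.

Lemma O_P t : O (P t) = t - O t.
Proof.
elim: t => [|t IH]; first by [].
rewrite P_S O_S; have := O_le t; have := f_le1 t; have fP0 := f_P t.
case E: (f t) => [|[|]] // _ Ho.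
  rewrite subn0 !O_S fP0 IH (f_P1 E); lia.
have -> : (P t).+2 - 1 = (P t).+1 by lia.
rewrite O_S fP0 IH; lia.
Qed.

Lemma ones2 x : O (x + 2) <= (O x).+1.
Proof.
rewrite addn2 !O_S; have := f_le1 x; have := f_le1 x.+1.
case E: (f x) => [|[|]] //; last by rewrite (no11 E); lia.
lia.
Qed.

Lemma ones_half x n : 2 * (O (x + n) - O x) <= n.+1.
Proof.
elim: n {-2}n (leqnn n) => [|N IH] n Hn.
  by move: Hn; rewrite leqn0 => /eqP ->; rewrite addn0 subnn.
case: n Hn => [|[|n]] Hn.
- by rewrite addn0 subnn.
- by rewrite addn1 O_S; have := f_le1 x; lia.
have := IH n (ltnW Hn); have := ones2 (x + n); rewrite -addnA addn2.
have := O_mono x n; have := O_mono (x + n) 2; rewrite -addnA addn2; lia.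
Qed.


Definition Z x := x - O x.

Lemma Zspec x : x <= P (Z x) <= x.+1 /\ (0 < Z x -> P (Z x).-1 < x).
Proof.
case: (decomp x) => [[t ->]|[t [-> H0]]].
- have -> : Z (P t) = t by rewrite /Z O_P /P; have := O_le t; lia.
  split; first lia.
  by case: t => [//|t] _ /=; apply: P_ltn.
- have -> : Z (P t).+1 = t.+1.
    by rewrite /Z O_S O_P f_P /P; have := O_le t; lia.
  rewrite P_S H0 subn0; split; first lia.
  by move=> _ /=.
Qed.

Lemma Z_lo x : x <= P (Z x). Proof. by case: (Zspec x) => /andP []. Qed.
Lemma Z_hi x : P (Z x) <= x.+1. Proof. by case: (Zspec x) => /andP []. Qed.
Lemma Z_prev x : 0 < Z x -> P (Z x).-1 < x. Proof. by case: (Zspec x). Qed.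
Lemma ZO x : Z x + O x = x. Proof. by rewrite /Z; have := O_le x; lia. Qed.

Lemma P0 : P 0 = 0. Proof. by []. Qed.

Lemma balance n : forall x y, O (x + n) - O x <= O (y + n) - O y + 1.
Proof.
elim: n {-2}n (leqnn n) => [|N IH] n Hn x y.
  by move: Hn; rewrite leqn0 => /eqP ->; rewrite !addn0 !subnn.
rewrite leqNgt; apply/negP => Hc.
have Hx2 := @Z_prev x.
have Hxn' := Z_lo (x + n).
have Hy1' := Z_lo y.
have Hyn2 := @Z_prev (y + n).
have := O_mono x n; have := O_mono y n.
have := ZO x; have := ZO y; have := ZO (x + n); have := ZO (y + n).
move=> Zyn Zxn Zy Zx My Mx.
have Hzyn : 0 < Z (y + n) by lia.
have {}Hyn2 := Hyn2 Hzyn.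
have PA := P_add (Z y) ((Z (y + n)).-1 - Z y).
have E1 : Z y + ((Z (y + n)).-1 - Z y) = (Z (y + n)).-1 by lia.
rewrite E1 in PA.
case: (posnP (Z x)) => Hzx.
- have x0 : x = 0 by have := Z_lo x; rewrite Hzx P0; lia.
  have IH1 := IH (Z (x + n)) _ (Z y) 0.
  have PB := P_add 0 (Z (x + n)); rewrite add0n P0 in PB.
  have M1 := O_mono (Z y) (Z (x + n)).
  have M2 := O_mono (Z y + Z (x + n)) ((Z (y + n)).-1 - (Z y + Z (x + n))).
  have E2 : Z y + Z (x + n) + ((Z (y + n)).-1 - (Z y + Z (x + n))) = (Z (y + n)).-1 by lia.
  rewrite E2 in M2; rewrite add0n in IH1.
  have Hle : Z (x + n) <= N by lia.
  have := IH1 Hle; have := O_le (Z (x + n)).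
  have O0 : O 0 = 0 by [].
  lia.
- have IH1 := IH (Z (x + n) - (Z x).-1) _ (Z y) (Z x).-1.
  have PB := P_add (Z x).-1 (Z (x + n) - (Z x).-1).
  have E3 : (Z x).-1 + (Z (x + n) - (Z x).-1) = Z (x + n) by lia.
  rewrite E3 in PB IH1.
  have M1 := O_mono (Z y) (Z (x + n) - (Z x).-1).
  have M2 := O_mono (Z y + (Z (x + n) - (Z x).-1)) ((Z (y + n)).-1 - (Z y + (Z (x + n) - (Z x).-1))).
  have E2 : Z y + (Z (x + n) - (Z x).-1) + ((Z (y + n)).-1 - (Z y + (Z (x + n) - (Z x).-1))) = (Z (y + n)).-1 by lia.
  rewrite E2 in M2.
  have Hle : Z (x + n) - (Z x).-1 <= N by lia.
  have := IH1 Hle; have := Hx2 Hzx.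
  lia.
Qed.


Definition occAt (w : seq nat) x : Prop := w = map f (iota x (size w)).

Lemma occ_nil x : occAt [::] x. Proof. by []. Qed.

Lemma occ_cons a r x : occAt (a :: r) x <-> f x = a /\ occAt r x.+1.
Proof.
rewrite /occAt /=; split; first by case=> -> <-.
by case=> -> {1}->.
Qed.

Lemma occ_cat u v x : occAt (u ++ v) x <-> occAt u x /\ occAt v (x + size u).
Proof.
elim: u x => [|a u IH] x /=; first by rewrite addn0; split => [H|[]].
rewrite !occ_cons IH addSnnS; tauto.
Qed.

Lemma occ_le1 w x : occAt w x -> all (fun a => a <= 1) w.
Proof. by move=> ->; apply/allP => a /mapP [j _ ->]; apply: f_le1. Qed.

Lemma occ_sum w x : occAt w x -> sumn w = O (x + size w) - O x.
Proof.
elim: w x => [|a w IH] x; first by rewrite addn0 subnn.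
move/occ_cons => [<- /IH] /= ->.
have -> : x + (size w).+1 = x.+1 + size w by lia.
have := O_mono x.+1 (size w); rewrite O_S; lia.
Qed.

Fixpoint desub (w : seq nat) : seq nat :=
  match w with
  | [::] => [::]
  | [:: 0] => [::]
  | 0 :: 1 :: r => 0 :: desub r
  | 0 :: ((0 :: _) as r) => 1 :: desub r
  | _ => [:: 2]
  end.

Lemma occ2 x : ~ occAt [:: 2] x.
Proof. by move/occ_cons => [H _]; have := f_le1 x; rewrite H. Qed.

Lemma fP1_0 t : (f (P t).+1 = 0) <-> (f t = 1).
Proof.
split.
  by case E: (f t) (f_le1 t) => [|[|]] // _; rewrite (f_P1 E).
exact: f_P1'.
Qed.

Lemma fP1_1 t : (f (P t).+1 = 1) <-> (f t = 0).
Proof.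
split; last exact: f_P1.
by case E: (f t) (f_le1 t) => [|[|]] // _; rewrite (f_P1' E).
Qed.

Lemma R2 n : forall v t, size v <= n ->
  (occAt (0 :: v) (P t) <-> occAt (desub (0 :: v)) t).
Proof.
elim: n => [|n IH] v t Hv.
  by case: v Hv => // _; rewrite occ_cons f_P; split => // _; split.
case: v Hv => [|[|[|a]] r] Hv.
- by rewrite occ_cons f_P; split => // _; split.
-
  have D : desub [:: 0, 0 & r] = 1 :: desub (0 :: r) by [].
  rewrite D occ_cons (occ_cons 1); split.
  + move=> [_ H]; have := H; move/occ_cons => [H1 _].
    have Ht := (proj1 (fP1_0 t) H1).
    have E : P t.+1 = (P t).+1 by rewrite P_S Ht; lia.
    split => //; apply/(IH r t.+1) => //; by rewrite E.
  + move=> [Ht H]; have E : P t.+1 = (P t).+1 by rewrite P_S Ht; lia.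
    have := (proj2 (IH r t.+1 Hv) H); rewrite E => H'.
    by split; first exact: f_P.
-
  have E0 : forall t, f t = 0 -> P t.+1 = (P t).+2 by move=> t' Ht'; rewrite P_S Ht'; lia.
  case: r Hv => [|[|b] r] Hv.
  + have D : desub [:: 0; 1] = [:: 0] by [].
    rewrite D !occ_cons fP1_1; split; first by move=> [_ [H _]].
    by move=> [H _]; split; [apply: f_P | split].
  + have D : desub [:: 0, 1, 0 & r] = 0 :: desub (0 :: r) by [].
    rewrite D !occ_cons fP1_1 -(IH r t.+1); last by move: Hv => /=; lia.
    rewrite occ_cons; split.
    * move=> [_ [Ht [H1 H2]]]; rewrite E0 //; tauto.
    * move=> [Ht [H1 H2]]; rewrite E0 // in H1 H2; split; [apply: f_P | tauto].
  + have D : desub [:: 0, 1, b.+1 & r] = [:: 0; 2] by [].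
    rewrite D !occ_cons; split.
    * move=> [_ [Ht [H _]]]; have Ht' := proj1 (fP1_1 t) Ht.
      by have := f_P t.+1; rewrite E0 // H.
    * by move=> [_ [H _]]; have := f_le1 t.+1; rewrite H.
- have D : desub [:: 0, a.+2 & r] = [:: 2] by [].
  rewrite D; split => [/occ_cons [_ /occ_cons [H _]]|/occ2] //.
  by have := f_le1 (P t).+1; rewrite H.
Qed.

Lemma R2' v t : occAt (0 :: v) (P t) <-> occAt (desub (0 :: v)) t.
Proof. exact: (@R2 (size v) v t (leqnn _)). Qed.

Lemma occ0_block v x : occAt (0 :: v) x -> exists t, x = P t.
Proof. by move/occ_cons => [H _]; apply: f0_block. Qed.


Lemma shape n : forall v, size v <= n -> all (fun a => a <= 1) (desub (0 :: v)) ->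
  0 :: v = fib_sub (desub (0 :: v)) \/ 0 :: v = rcons (fib_sub (desub (0 :: v))) 0.
Proof.
elim: n => [|n IH] v Hv.
  by case: v Hv => // _ _; right.
case: v Hv => [|[|[|a]] r] Hv.
- by right.
- have D : desub [:: 0, 0 & r] = 1 :: desub (0 :: r) by [].
  rewrite D => /andP [_ Ha].
  by case: (IH r Hv Ha) => E; [left | right]; rewrite fib_sub_cons /= -E.
- case: r Hv => [|[|b] r] Hv.
  + by left.
  + have D : desub [:: 0, 1, 0 & r] = 0 :: desub (0 :: r) by [].
    rewrite D => /andP [_ Ha].
    have Hr : size r <= n by move: Hv => /=; lia.
    by case: (IH r Hr Ha) => E; [left | right]; rewrite fib_sub_cons /= -E.
  + by [].
- by [].
Qed.

Lemma shape' v : all (fun a => a <= 1) (desub (0 :: v)) ->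
  0 :: v = fib_sub (desub (0 :: v)) \/ 0 :: v = rcons (fib_sub (desub (0 :: v))) 0.
Proof. exact: (@shape (size v) v (leqnn _)). Qed.

Lemma desub_size v t : occAt (desub (0 :: v)) t ->
  3 * size (desub (0 :: v)) <= 2 * size (0 :: v) + 1.
Proof.
move=> H; have Hall := occ_le1 H.
have Hs := occ_sum H; have Hh := ones_half t (size (desub (0 :: v))).
have Hf := size_fib_sub Hall.
case: (shape' Hall) => E.
- have Hsz : size (0 :: v) = size (fib_sub (desub (0 :: v))) by rewrite -E.
  rewrite Hsz; lia.
- have Hsz : size (0 :: v) = (size (fib_sub (desub (0 :: v)))).+1 by rewrite -(size_rcons _ 0) -E.
  rewrite Hsz; lia.
Qed.

Definition Inv w := exists t1 g s h, [/\ 0 < g, g.+2 <= h, occAt w t1, occAt w (t1 + g) &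
  forall x, s < x < s + h -> ~ occAt w x].

Lemma Inv_desub v : Inv (desub (0 :: v)) -> Inv (0 :: v).
Proof.
move=> [t1 [g [s [h [g0 gh o1 o2 run]]]]].
exists (P t1), (P (t1 + g) - P t1), (P s), (P (s + h) - P s).
have L1 : P t1 < P (t1 + g) by apply: P_ltn; lia.
have L2 : P s < P (s + h) by apply: P_ltn; lia.
split.
- lia.
- have A1 := P_add t1 g; have A2 := P_add s h.
  have B := balance g s t1.
  have Hh := ones_half (s + g) (h - g).
  have E : s + g + (h - g) = s + h by lia.
  rewrite E in Hh.
  have M1 := O_mono s g; have M2 := O_mono (s + g) (h - g); rewrite E in M2.
  have M3 := O_mono t1 g.
  lia.
- exact/R2'.
- have -> : P t1 + (P (t1 + g) - P t1) = P (t1 + g) by lia.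
  exact/R2'.
- move=> x /andP [Hx1 Hx2] Hocc.
  have [t Et] := occ0_block Hocc; subst x.
  have Hd := proj1 (R2' v t) Hocc.
  have Hx2' : P t < P (s + h) by lia.
  rewrite !P_ltE in Hx1 Hx2'.
  by apply: (run t) => //; rewrite Hx1 Hx2'.
Qed.

Lemma Inv_shift r : Inv (0 :: 1 :: r) -> Inv (1 :: r).
Proof.
move=> [t1 [g [s [h [g0 gh o1 o2 run]]]]].
exists t1.+1, g, s.+1, h; split => //.
- by move/occ_cons: o1 => [].
- by move/occ_cons: o2 => [_]; rewrite addSn.
- move=> x /andP [Hx1 Hx2] Hocc.
  have := Hocc; move/occ_cons => [H1 _].
  have [Hx0 Hf0] := f1_pred H1.
  apply: (run x.-1); first by apply/andP; lia.
  apply/occ_cons; split => //.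
  by have -> : x.-1.+1 = x by lia.
Qed.


Definition Wc := W 9.

Lemma map_fWc x n : x + n <= size Wc -> map f (iota x n) = map (nth 0 Wc) (iota x n).
Proof.
move=> H; apply/eq_in_map => i; rewrite mem_iota => /andP [_ Hi].
apply: (fE (n := 9)); rewrite /Wc in H; lia.
Qed.

Definition occB w x := (x + size w <= size Wc) && (w == map (nth 0 Wc) (iota x (size w))).
Definition noccB w x := (x + size w <= size Wc) && (w != map (nth 0 Wc) (iota x (size w))).

Lemma occB_sound w x : occB w x -> occAt w x.
Proof. by move=> /andP [H /eqP E]; rewrite /occAt map_fWc. Qed.

Lemma noccB_sound w x : noccB w x -> ~ occAt w x.
Proof. by move=> /andP [H /eqP E] O; apply: E; rewrite -map_fWc. Qed.

Definition InvB w t1 g s h := [&& 0 < g, g.+2 <= h, occB w t1, occB w (t1 + g) &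
  all (noccB w) (iota s.+1 h.-1)].

Definition searchInv w := has (fun t1 => has (fun g => has (fun s =>
  has (fun h => InvB w t1 g s h) (iota g.+2 2)) (iota 0 25)) (iota 1 10)) (iota 0 30).

Lemma searchInv_sound w : searchInv w -> Inv w.
Proof.
move=> /hasP [t1 _ /hasP [g _ /hasP [s _ /hasP [h _]]]].
move=> /and5P [g0 gh o1 o2 /allP run].
exists t1, g, s, h; split => //; try exact: occB_sound.
move=> x /andP [H1 H2]; apply: noccB_sound; apply: run.
rewrite mem_iota; lia.
Qed.

Lemma bad000 t : ~ occAt [:: 0; 0; 0] t.
Proof. by rewrite !occ_cons => -[H1 [H2 [H3 _]]]; apply: (no000 H1 H2 H3). Qed.
Lemma bad011 t : ~ occAt [:: 0; 1; 1] t.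
Proof. by rewrite !occ_cons => -[_ [H2 [H3 _]]]; have := no11 H2; rewrite H3. Qed.
Lemma bad110 t : ~ occAt [:: 1; 1; 0] t.
Proof. by rewrite !occ_cons => -[H1 [H2 _]]; have := no11 H1; rewrite H2. Qed.
Lemma bad111 t : ~ occAt [:: 1; 1; 1] t.
Proof. by rewrite !occ_cons => -[H1 [H2 _]]; have := no11 H1; rewrite H2. Qed.

Lemma zero_step v : 4 <= size (0 :: v) -> (exists x, occAt (0 :: v) x) ->
  (4 <= size (desub (0 :: v)) -> Inv (desub (0 :: v))) -> Inv (0 :: v).
Proof.
move=> Hs [x Hx] IH.
have [t Et] := occ0_block Hx; subst x.
have Hd := proj1 (R2' v t) Hx.
case: (leqP 4 (size (desub (0 :: v)))) => Hsz.
  by apply: Inv_desub; apply: IH.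
have Hall := occ_le1 Hd.
have HE := shape' Hall.
move: (desub (0 :: v)) Hd Hall HE Hsz => d Hd Hall HE Hsz.
case: HE => E; rewrite E in Hs *;
(case: d Hd Hall E Hs Hsz => [|a [|b [|c [|e r]]]] Hd Hall E Hs Hsz //;
 [ move: Hall => /= /andP [Ha _]
 | move: Hall => /= /and3P [Ha Hb _]
 | move: Hall => /= /and4P [Ha Hb Hc _] ]);
repeat match goal with
| H : is_true (?a <= 1) |- _ => is_var a; move: H; destruct a as [|[|?]]; move=> H; [clear H | clear H | by []]
end;
try (by exfalso; apply: bad000 Hd); try (by exfalso; apply: bad011 Hd);
try (by exfalso; apply: bad110 Hd); try (by exfalso; apply: bad111 Hd);
try (by exfalso; move: Hs; vm_compute);
apply: searchInv_sound; vm_compute; reflexivity.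
Qed.


Lemma main n : forall w, size w <= n -> 4 <= size w -> (exists x, occAt w x) -> Inv w.
Proof.
elim: n => [|n IH] w Hn H4 [x Hx]; first by move: Hn H4 Hx; case: w.
case: w Hn H4 Hx => [|[|[|a]] r] Hn H4 Hx //.
- apply: zero_step => //; first by exists x.
  move=> Hd4; have [t Et] := occ0_block Hx; subst x.
  have Hd := proj1 (R2' r t) Hx.
  apply: IH => //; last by exists t.
  have := desub_size Hd; move: Hn Hd4 => /=; lia.
- have := Hx; move/occ_cons => [Hx1 _].
  have [Hx0 Hf0] := f1_pred Hx1.
  have Hx' : occAt [:: 0, 1 & r] x.-1.
    by apply/occ_cons; split => //; have -> : x.-1.+1 = x by lia.
  apply: Inv_shift; apply: zero_step; [by move: H4 => /=; lia | by exists x.-1 | ].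
  move=> Hd4; have [t Et] := occ0_block Hx'; rewrite Et in Hx'.
  have Hd := proj1 (R2' _ t) Hx'.
  apply: IH => //; last by exists t.
  have := desub_size Hd; move: Hn Hd4 => /=; lia.
- by move/occ_cons: Hx => [H _]; have := f_le1 x; rewrite H.
Qed.

Lemma occ_count a n w : occ (map f (iota a n)) w =
  count (fun i => (i + size w <= n) && (w == map f (iota (a + i) (size w)))) (iota 0 n.+1).
Proof.
rewrite /occ size_map size_iota; apply: eq_in_count => i _.
case H: (i + size w <= n) => //=.
rewrite -map_drop -map_take drop_iota take_iota eq_sym.
by have -> : minn (size w) (n - i) = size w by lia.
Qed.

Lemma Inv_unbal w : Inv w -> exists u v, [/\ is_factor f u, is_factor f v, size u = size v &
  (1 < occ u w - occ v w) || (1 < occ v w - occ u w)].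
Proof.
move=> [t1 [g [s [h [g0 gh o1 o2 run]]]]].
set n := g + size w.
exists (map f (iota t1 n)), (map f (iota s.+1 n)); split.
- by exists t1; rewrite size_map size_iota mk_iota.
- by exists s.+1; rewrite size_map size_iota mk_iota.
- by rewrite !size_map !size_iota.
have Hlow : occ (map f (iota s.+1 n)) w = 0.
  rewrite occ_count; apply/eqP; rewrite -leqn0 leqNgt -has_count.
  apply/hasPn => i; rewrite mem_iota => /andP [_ Hi].
  apply/negP => /andP [H1 /eqP H2].
  apply: (run (s.+1 + i)) => //; apply/andP; rewrite /n in H1; lia.
have Hhigh : 2 <= occ (map f (iota t1 n)) w.
  rewrite occ_count.
  have E : n.+1 = g + (n.+1 - g) by rewrite /n; lia.
  rewrite E iotaD count_cat add0n.
  have -> : iota 0 g = 0 :: iota 1 g.-1 by case: (g) g0.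
  have E2 : n.+1 - g = (n - g).+1 by rewrite /n; lia.
  have P0 : (0 + size w <= n) && (w == map f (iota (t1 + 0) (size w))).
    by rewrite addn0 -o1 eqxx andbT /n; lia.
  have P1 : (g + size w <= n) && (w == map f (iota (t1 + g) (size w))).
    by rewrite -o2 eqxx andbT /n; lia.
  have C : forall (a : pred nat) x s, count a (x :: s) = a x + count a s by [].
  rewrite E2 !C P0 P1; lia.
rewrite Hlow subn0; apply/orP; left; lia.
Qed.

Lemma count_trunc (Q : pred nat) n k : 0 < k ->
  count (fun i => (i + k <= n) && Q i) (iota 0 n.+1) = count Q (iota 0 (n.+1 - k)).
Proof.
move=> Hk.
have E : n.+1 = (n.+1 - k) + (n.+1 - (n.+1 - k)) by lia.
rewrite {1}E iotaD count_cat add0n.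
have -> : count (fun i => (i + k <= n) && Q i) (iota (n.+1 - k) (n.+1 - (n.+1 - k))) = 0.
  apply/eqP; rewrite -leqn0 leqNgt -has_count; apply/hasPn => i.
  rewrite mem_iota => /andP [Hi _]; apply/negP => /andP [H _]; lia.
rewrite addn0; apply: eq_in_count => i; rewrite mem_iota => /andP [_ Hi].
by have -> : i + k <= n by lia.
Qed.

Lemma count_ones b m : count (fun i => f (b + i) == 1) (iota 0 m) = O (b + m) - O b.
Proof.
elim: m => [|m IH]; first by rewrite addn0 subnn.
have -> : iota 0 m.+1 = iota 0 m ++ [:: m] by rewrite -addn1 iotaD.
rewrite count_cat IH /= addn0 addnS O_S.
have := O_mono b m; have := f_le1 (b + m); case: (f (b + m)) => [|[|]] //=; lia.
Qed.

Lemma occ_1 a n : occ (map f (iota a n)) [:: 1] = O (a + n) - O a.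
Proof.
rewrite occ_count count_trunc // subSS subn0 -count_ones.
apply: eq_in_count => i _ /=.
by rewrite eqseq_cons eqxx andbT eq_sym.
Qed.

Lemma occ_01 a n : occ (map f (iota a n)) [:: 0; 1] = O (a.+1 + (n.+1 - 2)) - O a.+1.
Proof.
rewrite occ_count count_trunc // -count_ones.
apply: eq_in_count => i _ /=; rewrite addSn !eqseq_cons eqxx andbT.
case E: (f (a + i).+1) (f_le1 (a + i).+1) => [|[|]] // _; first by rewrite andbF.
by have [_ /= ->] := f1_pred E.
Qed.

Lemma occ_010 a n : occ (map f (iota a n)) [:: 0; 1; 0] = O (a.+1 + (n.+1 - 3)) - O a.+1.
Proof.
rewrite occ_count count_trunc // -count_ones.
apply: eq_in_count => i _ /=; rewrite addSn !eqseq_cons eqxx andbT.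
case E: (f (a + i).+1) (f_le1 (a + i).+1) => [|[|]] // _; first by rewrite andbF.
by have [_ /= ->] := f1_pred E; rewrite (no11 E).
Qed.

Theorem theorem16 (k : nat) : 1 <= k ->
  (totally_unbalanced fib_word k 1 <-> 4 <= k).
Proof.
move=> Hk; split.
- move=> TU; rewrite leqNgt; apply/negP => Hk3.
  have Hcontra : forall w c, size w = k -> is_factor f w ->
      (forall a n, occ (map f (iota a n)) w = O (a + c + (n.+1 - k)) - O (a + c)) -> False.
    move=> w c Hw Fw Hocc.
    have [u [v [[i Hu] [j Hv] Huv H]]] := TU w Hw Fw.
    rewrite mk_iota in Hu; rewrite mk_iota in Hv.
    rewrite Hu Hv !Hocc -Huv in H.
    have B1 := balance ((size u).+1 - k) (i + c) (j + c).
    have B2 := balance ((size u).+1 - k) (j + c) (i + c).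
    move: H => /orP []; lia.
  move: Hk Hk3; case: k TU Hcontra => [|[|[|[|k]]]] // TU Hcontra _ _.
  + apply: (Hcontra [:: 1] 0) => //; first by exists 1.
    by move=> a n; rewrite occ_1 !addn0 subSS subn0.
  + apply: (Hcontra [:: 0; 1] 1) => //; first by exists 0.
    by move=> a n; rewrite occ_01 !addn1.
  + apply: (Hcontra [:: 0; 1; 0] 1) => //; first by exists 0.
    by move=> a n; rewrite occ_010 !addn1.
- move=> H4 w Hw [x Hx].
  apply: Inv_unbal; apply: (main (leqnn (size w))); first by rewrite Hw.
  by exists x; rewrite /occAt -mk_iota.
Qed.
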